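(* Let $\mathcal H$ be a class of functions $\mathcal X\to[-1,1]$ and $\mathcal F$ a class of functions $\mathcal Z\to[-1,1]$, and let samples $(y_i,x_i,z_i)_{i=1}^n$ with $y_i\in[-1,1]$ be given. Assume access to $\mathrm{Oracle}_{\mathcal F}(z_{1:n},u_{1:n})\in\arg\min_{f\in\mathcal F}\frac1n\sum_i(u_i-f(z_i))^2$ and $\mathrm{Oracle}_{\mathcal H}(x_{1:n},v_{1:n},w_{1:n})\in\arg\max_{h\in\mathcal H}\frac1n\sum_iw_i\Pr_{\xi_i\sim\mathrm{Bernoulli}((1+h(x_i))/2)}[v_i=\xi_i]$. Consider the algorithm that for $t=1,\dots,T$ sets $$u_i^t=\tfrac12\Big(y_i-\tfrac1{t-1}\textstyle\sum_{\tau=1}^{t-1}h_\tau(x_i)\Big),\quad f_t=\mathrm{Oracle}_{\mathcal F}(z_{1:n},u^t_{1:n}),$$ $$v_i^t=\mathbf 1\{f_t(z_i)>0\},\quad w_i^t=|f_t(z_i)|,\quad h_t=\mathrm{Oracle}_{\mathcal H}(x_{1:n},v^t_{1:n},w^t_{1:n})$$ (for $t=1$ the empty average is interpreted as $0$). Suppose the set $A=\{(f(z_1),\dots,f(z_n)):f\in\mathcal F\}$ is convex. Then the ensemble $\bar h=\frac1T\sum_{t=1}^Th_t$ is an $\frac{8(\log T+1)}{T}$-approximate solution to the minimax problem $\min_{h\in\mathcal H}\sup_{f\in\mathcal F}\Psi_n(h,f)-\|f\|_{2,n}^2$, i.e. $\sup_{f\in\mathcal F}\big(\Psi_n(\bar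 h,f)-\|f\|_{2,n}^2\big)\le\inf_{h\in\mathcal H}\sup_{f\in\mathcal F}\big(\Psi_n(h,f)-\|f\|_{2,n}^2\big)+\frac{8(\log T+1)}{T}$.
   Context: $\Psi_n(h,f)=\frac1n\sum_i(y_i-h(x_i))f(z_i)$ and $\|f\|_{2,n}^2=\frac1n\sum_if(z_i)^2$. *)

(* Defs.v *)
From mathcomp Require Import all_boot all_order all_algebra.
From mathcomp Require Import boolp classical_sets reals exp.
Set Implicit Arguments. Unset Strict Implicit. Unset Printing Implicit Defensive.
Import Order.TTheory GRing.Theory Num.Theory.
Local Open Scope ring_scope.
Local Open Scope classical_set_scope.

Section Defs.
Variables (R : realType) (X Z : Type) (n : nat).
Variables (y : 'I_n -> R) (x : 'I_n -> X) (z : 'I_n -> Z).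

Definition Psi (h : X -> R) (f : Z -> R) : R :=
  n%:R^-1 * \sum_(i < n) (y i - h (x i)) * f (z i).

Definition norm2n_sq (f : Z -> R) : R := n%:R^-1 * \sum_(i < n) f (z i) ^+ 2.

Definition Phi (h : X -> R) (f : Z -> R) : R := Psi h f - norm2n_sq f.

Definition sq_loss (u : 'I_n -> R) (f : Z -> R) : R :=
  n%:R^-1 * \sum_(i < n) (u i - f (z i)) ^+ 2.

(* Pr_{xi ~ Bernoulli(p)}[b = xi] for b in {0,1} (true = 1) *)
Definition bern_prob (p : R) (b : bool) : R := if b then p else 1 - p.

Definition H_obj (v : 'I_n -> bool) (w : 'I_n -> R) (h : X -> R) : R :=
  n%:R^-1 * \sum_(i < n) w i * bern_prob ((1 + h (x i)) / 2) (v i).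

Definition is_oracleF (F : set (Z -> R)) (OF : ('I_n -> R) -> Z -> R) : Prop :=
  forall u, F (OF u) /\ forall f, F f -> sq_loss u (OF u) <= sq_loss u f.

Definition is_oracleH (H : set (X -> R))
    (OH : ('I_n -> bool) -> ('I_n -> R) -> X -> R) : Prop :=
  forall v w, H (OH v w) /\ forall h, H h -> H_obj v w h <= H_obj v w (OH v w).

Definition sample_set_convex (F : set (Z -> R)) : Prop :=
  forall f g, F f -> F g -> forall l : R, 0 <= l <= 1 ->
    exists k, F k /\ forall i, k (z i) = l * f (z i) + (1 - l) * g (z i).

Definition avg_prev (hs : seq (X -> R)) (a : X) : R :=
  if hs is [::] then 0 else (\sum_(h <- hs) h a) / (size hs)%:R.

Variables (OF : ('I_n -> R) -> Z -> R)
          (OH : ('I_n -> bool) -> ('I_n -> R) -> X -> R).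

Definition step (hs : seq (X -> R)) : X -> R :=
  let u := fun i => (y i - avg_prev hs (x i)) / 2 in
  let f := OF u in
  OH (fun i => 0 < f (z i)) (fun i => `|f (z i)|).

Fixpoint run (t : nat) : seq (X -> R) :=
  match t with
  | 0 => [::]
  | t'.+1 => rcons (run t') (step (run t'))
  end.

Definition ensemble (T : nat) (a : X) : R := (\sum_(h <- run T) h a) / T%:R.

End Defs.

(* Main.v *)
Require Import Defs.
From mathcomp Require Import all_boot all_order all_algebra.
From mathcomp Require Import boolp classical_sets reals exp.
From mathcomp Require Import ring lra.
Import Order.TTheory GRing.Theory Num.Theory.
Local Open Scope ring_scope.
Local Open Scope classical_set_scope.

Lemma sum_inv_le (R : realType) m (P Q : 'I_m -> R) :
  m%:R^-1 * \sum_i P i <= m%:R^-1 * \sum_i Q i -> \sum_i P i <= \sum_i Q i.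
Proof.
case: m P Q => [|m] P Q; first by rewrite !big_ord0.
by rewrite ler_pM2l // invr_gt0 ltr0n.
Qed.

Lemma invn_mul_le1 (R : realType) m : (m%:R : R)^-1 * m%:R <= 1.
Proof.
case: m => [|m]; first by rewrite mulr0.
by rewrite mulVf // pnatr_eq0.
Qed.

Lemma pt_bound (R : realType) (k a a' h yy u u' v : R) : 0 < k ->
  -1 <= a <= 1 -> -1 <= a' <= 1 -> -1 <= h <= 1 -> -1 <= yy <= 1 ->
  -1 <= u <= 1 -> -1 <= v <= 1 -> 2 * v = yy - h ->
  k * (u - u') = u - v ->
  k * ((h * a - yy * a + a ^+ 2) - (h * a' - yy * a' + a' ^+ 2))
  <= 8 + 2 * k ^+ 2 * ((u - a) * (a' - a) + (u' - a') * (a - a')).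
Proof.
move=> k0 ha ha' hh hy hu hv hvd hk.
have h1 : 0 <= (2 * k * (a - a') - (a + a' - (yy - h))) ^+ 2 := sqr_ge0 _.
have h2 : (a + a' - (yy - h)) ^+ 2 <= 16 by nra.
have h3 : 0 <= (k * (a - a') - k * (u - u')) ^+ 2 := sqr_ge0 _.
have h4 : (k * (u - u')) ^+ 2 <= 4 by rewrite hk; nra.
nra.
Qed.

Section Main.
Variables (R : realType) (X Z : Type) (n : nat).
Variables (H : set (X -> R)) (F : set (Z -> R)).
Variables (y : 'I_n -> R) (x : 'I_n -> X) (z : 'I_n -> Z).
Variables (OF : ('I_n -> R) -> Z -> R)
          (OH : ('I_n -> bool) -> ('I_n -> R) -> X -> R).
Hypothesis hH : forall h, H h -> forall a, -1 <= h a <= 1.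
Hypothesis hF : forall f, F f -> forall c, -1 <= f c <= 1.
Hypothesis hy : forall i, -1 <= y i <= 1.
Hypothesis oF : is_oracleF z F OF.
Hypothesis oH : is_oracleH x H OH.
Hypothesis cvx : sample_set_convex z F.

Definition run' t := run y x z OF OH t.
Definition hh t := step y x z OF OH (run' t).
Definition uu t := fun i => (y i - avg_prev (run' t) (x i)) / 2.
Definition ff t := OF (uu t).
Definition SS t a := \sum_(s < t) hh s a.
Definition Lg (g : X -> R) (f : Z -> R) :=
  \sum_(i < n) (g (x i) * f (z i) - y i * f (z i) + f (z i) ^+ 2).

Lemma runE t : run' t = [seq hh s | s <- iota 0 t].
Proof.
elim: t => [//|t IH].
have -> : run' t.+1 = rcons (run' t) (hh t) by [].
by rewrite IH -addn1 iotaD map_cat /= cats1 add0n.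
Qed.

Lemma size_run t : size (run' t) = t.
Proof. by rewrite runE size_map size_iota. Qed.

Lemma sum_run t a : \sum_(h <- run' t) h a = SS t a.
Proof.
rewrite runE big_map /SS.
have -> : iota 0 t = index_iota 0 t by rewrite /index_iota subn0.
by rewrite big_mkord.
Qed.

Lemma SSS t a : SS t.+1 a = SS t a + hh t a.
Proof. by rewrite /SS big_ord_recr. Qed.

Lemma u2 t i : 2 * t%:R * uu t i = t%:R * y i - SS t (x i).
Proof.
case: t => [|t]; first by rewrite /SS big_ord0; lra.
rewrite /uu /avg_prev -/(run' t.+1).
have := size_run t.+1; have := sum_run t.+1 (x i).
case: (run' t.+1) => [//|h hs] -> ->.
by field; rewrite addrC natr1 pnatr_eq0.
Qed.

Lemma hh_H t : H (hh t).
Proof. by rewrite /hh /step; apply: (oH _ _).1. Qed.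

Lemma ff_F t : F (ff t).
Proof. exact: (oF _).1. Qed.

Lemma hh_bd t a : -1 <= hh t a <= 1.
Proof. exact: hH (hh_H t) a. Qed.

Lemma SS_bd t a : - t%:R <= SS t a <= t%:R.
Proof.
elim: t => [|t IH]; first by rewrite /SS big_ord0 oppr0 lexx.
rewrite SSS -natr1; have := hh_bd t a; lra.
Qed.

Lemma uu_bd t i : -1 <= uu t i <= 1.
Proof.
case: t => [|t].
  by rewrite /uu /avg_prev /= subr0; have := hy i; lra.
have := u2 t.+1 i; have := SS_bd t.+1 (x i); have := hy i.
have : 0 < t.+1%:R :> R by rewrite ltr0n.
move: (t.+1%:R : R) => k; nra.
Qed.

Lemma uu_rec t i :
  t.+1%:R * (uu t i - uu t.+1 i) = uu t i - (y i - hh t (x i)) / 2.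
Proof.
have := u2 t i; have := u2 t.+1 i; rewrite SSS -natr1.
rewrite -[t.+1%:R]natr1.
have : 2 * ((y i - hh t (x i)) / 2) = y i - hh t (x i) by field.
move: ((y i - hh t (x i)) / 2) => v; move: (t%:R : R) => k; nra.
Qed.


Lemma VI w g : F g ->
  \sum_i (w i - OF w (z i)) * (g (z i) - OF w (z i)) <= 0.
Proof.
move=> Fg.
set S := \sum_i _.
set D := \sum_i (g (z i) - OF w (z i)) ^+ 2.
have key : forall l : R, 0 < l <= 1 -> 2 * l * S <= l ^+ 2 * D.
  move=> l /andP[l0 l1].
  have [k [Fk hk]] := @cvx _ _ Fg (oF w).1 l (ltac:(apply/andP; split; lra)).
  have := (oF w).2 k Fk; rewrite /sq_loss => /sum_inv_le h.
  have e : \sum_i (w i - k (z i)) ^+ 2 - \sum_i (w i - OF w (z i)) ^+ 2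
           = l ^+ 2 * D - 2 * l * S.
    rewrite /D /S !mulr_sumr -!sumrB; apply: eq_bigr => i _; rewrite hk; ring.
  by rewrite -subr_ge0 -e subr_ge0.
rewrite leNgt; apply/negP => S0.
have D0 : 0 <= D by rewrite sumr_ge0 // => i _; exact: sqr_ge0.
have SD : 0 < S + D by lra.
have l0 : 0 < S / (S + D) by rewrite divr_gt0.
have hl : S / (S + D) * (S + D) = S by field; lra.
have l1 : S / (S + D) <= 1 by rewrite ler_pdivrMr // mul1r; lra.
have := key (S / (S + D)) (ltac:(apply/andP; split => //)).
move: hl l0 l1; move: (S / (S + D)) => l hl l0 l1 hk.
have := mulr_gt0 l0 S0; nra.
Qed.

Lemma sumLt m i (g : R) :
  \sum_(t < m) (hh t (x i) * g - y i * g + g ^+ 2)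
  = SS m (x i) * g + m%:R * (g ^+ 2 - y i * g).
Proof.
elim: m => [|m IH]; first by rewrite /SS !big_ord0; ring.
by rewrite big_ord_recr /= IH SSS -natr1; ring.
Qed.

Lemma sumLg m (f : Z -> R) :
  \sum_(t < m) Lg (hh t) f
  = \sum_i (SS m (x i) * f (z i) + m%:R * (f (z i) ^+ 2 - y i * f (z i))).
Proof.
rewrite /Lg exchange_big; apply: eq_bigr => i _; exact: sumLt.
Qed.

Lemma leader m g : F g ->
  \sum_(t < m) Lg (hh t) (ff m) <= \sum_(t < m) Lg (hh t) g.
Proof.
move=> Fg.
have E : forall a : Z -> R,
  \sum_(t < m) Lg (hh t) a =
  m%:R * \sum_i (uu m i - a (z i)) ^+ 2 - m%:R * \sum_i uu m i ^+ 2.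
  move=> a; rewrite sumLg !mulr_sumr -sumrB; apply: eq_bigr => i _.
  rewrite (_ : SS m (x i) = m%:R * y i - 2 * m%:R * uu m i); first by ring.
  by rewrite u2; ring.
rewrite !E lerD2r ler_wpM2l ?ler0n //.
have := (oF (uu m)).2 g Fg; rewrite /sq_loss => /sum_inv_le.
done.
Qed.

Lemma btl m g : F g ->
  \sum_(t < m) Lg (hh t) (ff t.+1) <= \sum_(t < m) Lg (hh t) g.
Proof.
elim: m g => [|m IH] g Fg; first by rewrite !big_ord0.
rewrite big_ord_recr /=; apply: (le_trans _ (leader m.+1 _ Fg)).
rewrite [X in _ <= X]big_ord_recr /= lerD2r.
exact: IH (ff_F _).
Qed.


Lemma step_bound t :
  t.+1%:R * (Lg (hh t) (ff t) - Lg (hh t) (ff t.+1)) <= 8 * n%:R.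
Proof.
have V1 := VI (uu t) _ (ff_F t.+1).
have V2 := VI (uu t.+1) _ (ff_F t).
rewrite /ff in V1 V2 *.
have k0 : 0 < t.+1%:R :> R by rewrite ltr0n.
have : t.+1%:R * (Lg (hh t) (OF (uu t)) - Lg (hh t) (OF (uu t.+1))) <=
  \sum_i (8 + 2 * t.+1%:R ^+ 2 *
     ((uu t i - OF (uu t) (z i)) * (OF (uu t.+1) (z i) - OF (uu t) (z i)) +
      (uu t.+1 i - OF (uu t.+1) (z i)) * (OF (uu t) (z i) - OF (uu t.+1) (z i)))).
  rewrite /Lg -sumrB mulr_sumr; apply: ler_sum => i _.
  apply: (@pt_bound R _ _ _ _ _ _ _ _ k0 (hF _ (ff_F t) _) (hF _ (ff_F t.+1) _) (hh_bd t _) (hy i)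
     (uu_bd t i) _ _ (uu_rec t i)).
  - have := hh_bd t (x i); have := hy i.
    have : 2 * ((y i - hh t (x i)) / 2) = y i - hh t (x i) by field.
    move: ((y i - hh t (x i)) / 2) => v; lra.
  - by field.
rewrite big_split /= sumr_const card_ord -mulr_sumr big_split /=.
move: (\sum_i _) V1 => S1 V1; move: (\sum_i _) V2 => S2 V2.
have := sqr_ge0 (t.+1%:R : R).
move: (t.+1%:R ^+ 2 : R) => K K0 h.
apply: le_trans h _.
rewrite -mulr_natr mulrC; nra.
Qed.

Lemma harmonic T : (0 < T)%N -> \sum_(t < T) (t.+1%:R : R)^-1 <= 1 + ln T%:R.
Proof.
case: T => [//|T] _.
elim: T => [|T IH]; first by rewrite big_ord1 ln1 invr1 addr0.
rewrite big_ord_recr /=.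
have key : (T.+2%:R : R)^-1 <= ln T.+2%:R - ln T.+1%:R.
  have h := @le_ln1Dx R (- T.+2%:R^-1).
  have hlt : -1 < - (T.+2%:R : R)^-1.
    rewrite ltrN2 invf_lt1 ?ltr0n // ltr1n //.
  have := h hlt.
  have -> : 1 - (T.+2%:R : R)^-1 = T.+1%:R * T.+2%:R^-1.
    by field; rewrite gt_eqF //; have := ler0n R T; lra.
  rewrite lnM ?posrE ?invr_gt0 ?ltr0n // lnV ?posrE ?ltr0n //.
  move: (T.+2%:R^-1 : R) => q; move: (ln _) (ln _) => a b; lra.
move: IH key; move: (\sum_(i < T.+1) _) (T.+2%:R^-1 : R) (ln _) (ln _) => a b c d; lra.
Qed.

Lemma regret T g : F g ->
  \sum_(t < T) Lg (hh t) (ff t) - \sum_(t < T) Lg (hh t) g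
  <= 8 * n%:R * \sum_(t < T) (t.+1%:R : R)^-1.
Proof.
move=> Fg; have B := btl T _ Fg.
have : \sum_(t < T) (Lg (hh t) (ff t) - Lg (hh t) (ff t.+1))
   <= \sum_(t < T) 8 * n%:R * (t.+1%:R : R)^-1.
  apply: ler_sum => t _.
  have := step_bound t.
  move: (Lg _ _ - _) => L hL.
  have k0 : 0 < t.+1%:R :> R by rewrite ltr0n.
  rewrite -(ler_pM2l k0) mulrCA mulfV ?mulr1 //.
  by rewrite gt_eqF.
rewrite sumrB -mulr_sumr; lra.
Qed.

Lemma br t h : H h -> Lg h (ff t) <= Lg (hh t) (ff t).
Proof.
move=> Hh.
have := (oH (fun i => 0 < ff t (z i)) (fun i => `|ff t (z i)|)).2 h Hh.
rewrite /H_obj => /sum_inv_le.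
rewrite -/(hh t).
have E : forall (g : X -> R) i, 
  `|ff t (z i)| * bern_prob ((1 + g (x i)) / 2) (0 < ff t (z i))
  = `|ff t (z i)| / 2 + ff t (z i) * g (x i) / 2.
  move=> g i; rewrite /bern_prob; case: ltrP => hf.
    by rewrite ger0_norm ?ltW //; field.
  by rewrite ler0_norm //; field.
move=> hle; rewrite -subr_ge0 /Lg -sumrB.
rewrite (eq_bigr (fun i =>
  2 * (`|ff t (z i)| * bern_prob ((1 + hh t (x i)) / 2) (0 < ff t (z i)) -
       `|ff t (z i)| * bern_prob ((1 + h (x i)) / 2) (0 < ff t (z i))))).
  by rewrite -mulr_sumr sumrB mulr_ge0 // subr_ge0.
by move=> i _; rewrite !E; field.
Qed.

Lemma Lg_convex g f1 f2 k l : 0 <= l <= 1 ->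
  (forall i, k (z i) = l * f1 (z i) + (1 - l) * f2 (z i)) ->
  Lg g k <= l * Lg g f1 + (1 - l) * Lg g f2.
Proof.
move=> /andP[l0 l1] hk; rewrite /Lg !mulr_sumr -big_split /=.
apply: ler_sum => i _; rewrite hk.
have := sqr_ge0 (f1 (z i) - f2 (z i)).
have := mulr_ge0 l0 (ltac:(lra) : 0 <= 1 - l).
move: (f1 (z i)) (f2 (z i)) => a b; nra.
Qed.

Lemma jensen g (fam : nat -> Z -> R) m : (forall t, F (fam t)) ->
  exists k, F k /\ m.+1%:R * Lg g k <= \sum_(t < m.+1) Lg g (fam t).
Proof.
move=> Ffam; elim: m => [|m [k [Fk hk]]].
  by exists (fam 0%N); split => //; rewrite big_ord1 mul1r.
have l01 : 0 <= (m.+1%:R / m.+2%:R : R) <= 1.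
  apply/andP; split; first by rewrite divr_ge0.
  by rewrite ler_pdivrMr ?ltr0n // mul1r ler_nat.
have [k' [Fk' hk']] := @cvx k (fam m.+1) Fk (Ffam _) _ l01.
exists k'; split => //.
have C := Lg_convex g _ _ _ _ l01 hk'.
rewrite big_ord_recr /=.
have m2 : 0 < m.+2%:R :> R by rewrite ltr0n.
apply: le_trans (ler_wpM2l (ltW m2) C) _.
have e1 : m.+2%:R * (m.+1%:R / m.+2%:R) = m.+1%:R :> R.
  by field; rewrite gt_eqF //; have := ler0n R m; lra.
have e2 : m.+2%:R * (1 - m.+1%:R / m.+2%:R) = 1 :> R.
  by field; rewrite gt_eqF //; have := ler0n R m; lra.
rewrite mulrDr mulrA e1 mulrA e2 mul1r lerD2r.
exact: hk.
Qed.

Lemma PhiE g f : Phi y x z g f = - (n%:R^-1 * Lg g f).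
Proof.
rewrite /Phi /Psi /norm2n_sq -mulrBr -sumrB -mulrN /Lg -sumrN.
congr (_ * _); apply: eq_bigr => i _; ring.
Qed.

Lemma Lg_ens T f : (0 < T)%N ->
  T%:R * Lg (ensemble y x z OF OH T) f = \sum_(t < T) Lg (hh t) f.
Proof.
move=> T0; rewrite sumLg /Lg mulr_sumr; apply: eq_bigr => i _.
rewrite /ensemble (sum_run T (x i)).
by field; rewrite pnatr_eq0 -lt0n.
Qed.

Lemma Phi_le1 h f : H h -> Phi y x z h f <= 1.
Proof.
move=> Hh; rewrite /Phi /Psi /norm2n_sq -mulrBr -sumrB.
apply: le_trans (invn_mul_le1 R n).
apply: ler_wpM2l; first by rewrite invr_ge0 ler0n.
have -> : (n%:R : R) = \sum_(i < n) 1 by rewrite sumr_const card_ord.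
apply: ler_sum => i _.
have := hH _ Hh (x i); have := hy i; have := sqr_ge0 (2 * f (z i) - (y i - h (x i))).
move: (f (z i)) (y i) (h (x i)) => a b c; nra.
Qed.

Lemma main T : (0 < T)%N ->
  sup [set Phi y x z (ensemble y x z OF OH T) f | f in F]
    <= inf [set sup [set Phi y x z h f | f in F] | h in H]
       + 8 * (ln (T%:R : R) + 1) / T%:R.
Proof.
move=> T0.
have T0' : 0 < T%:R :> R by rewrite ltr0n.
have lnT : 0 <= ln (T%:R : R) by rewrite ln_ge0 // ler1n.
have Fne : F (OF (fun _ => 0)) := (oF _).1.
have Hne : H (OH (fun _ => true) (fun _ => 0)) := (oH _ _).1.
have core : forall h, H h -> forall f, F f ->
    Phi y x z (ensemble y x z OF OH T) f
    <= sup [set Phi y x z h g | g in F] + 8 * (ln (T%:R : R) + 1) / T%:R.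
  move=> h Hh f Ff.
  have [k [Fk hk]] : exists k, F k /\
      T%:R * Lg h k <= \sum_(t < T) Lg h (ff t).
    by have := jensen h ff T.-1 ff_F; rewrite prednK.
  have hs : has_sup [set Phi y x z h g | g in F].
    split; first by exists (Phi y x z h (OF (fun _ => 0))); exists (OF (fun _ => 0)).
    by exists 1 => _ [g Fg <-]; exact: Phi_le1.
  have le_s : Phi y x z h k <= sup [set Phi y x z h g | g in F].
    by apply: sup_upper_bound hs _ _; exists k.
  have R1 := regret T _ Ff.
  have Hs := harmonic _ T0.
  have BR : \sum_(t < T) Lg h (ff t) <= \sum_(t < T) Lg (hh t) (ff t).
    by apply: ler_sum => t _; exact: br.
  have LE := Lg_ens _ f T0.
  set C := 8 * n%:R * (1 + ln (T%:R : R)).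
  have hC : T%:R * Lg h k - C <= T%:R * Lg (ensemble y x z OF OH T) f.
    have : 8 * n%:R * \sum_(t < T) (t.+1%:R : R)^-1 <= C.
      by rewrite /C ler_wpM2l // mulr_ge0 // ler0n.
    move: R1 BR hk LE; rewrite /C.
    move: (\sum_(t < T) Lg h (ff t)) (\sum_(t < T) Lg (hh t) (ff t))
          (\sum_(t < T) Lg (hh t) f) (8 * n%:R * _) => a b c d.
    move: (T%:R * _) (T%:R * _) => e1 e2; lra.
  have hL : Lg h k - C / T%:R <= Lg (ensemble y x z OF OH T) f.
    rewrite -(ler_pM2l T0') (_ : T%:R * (Lg h k - C / T%:R) = T%:R * Lg h k - C) //.
    by field; rewrite gt_eqF.
  have N0 : 0 <= (n%:R : R)^-1 by rewrite invr_ge0 ler0n.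
  have hN := ler_wpM2l N0 hL.
  have hNC : (n%:R : R)^-1 * (C / T%:R) <= 8 * (ln (T%:R : R) + 1) / T%:R.
    rewrite /C (_ : n%:R^-1 * (8 * n%:R * (1 + ln T%:R) / T%:R)
       = (n%:R^-1 * n%:R) * (8 * (ln (T%:R : R) + 1) / T%:R)); last first.
      by rewrite /C; ring.
    apply: ler_piMl; last exact: invn_mul_le1.
    by rewrite divr_ge0 // mulr_ge0 //; lra.
  rewrite !PhiE in le_s *.
  rewrite mulrBr in hN.
  move: hN hNC le_s.
  move: (n%:R^-1 * (C / T%:R)) (8 * (ln (T%:R : R) + 1) / T%:R)
        (n%:R^-1 * Lg h k) (n%:R^-1 * Lg _ f) (sup _) => a b c d e; lra.
rewrite -lerBlDr; apply: lb_le_inf.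
  by exists (sup [set Phi y x z (OH (fun _ => true) (fun _ => 0)) g | g in F]);
     exists (OH (fun _ => true) (fun _ => 0)).
move=> _ [h Hh <-]; rewrite lerBlDr; apply: ge_sup.
  by exists (Phi y x z (ensemble y x z OF OH T) (OF (fun _ => 0)));
     exists (OF (fun _ => 0)).
by move=> _ [f Ff <-]; exact: core.
Qed.

End Main.

Theorem theorem3 (R : realType) (X Z : Type) (n T : nat)
    (H : set (X -> R)) (F : set (Z -> R))
    (y : 'I_n -> R) (x : 'I_n -> X) (z : 'I_n -> Z)
    (OF : ('I_n -> R) -> Z -> R)
    (OH : ('I_n -> bool) -> ('I_n -> R) -> X -> R) :
  (forall h, H h -> forall a, -1 <= h a <= 1) ->
  (forall f, F f -> forall c, -1 <= f c <= 1) ->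
  (forall i, -1 <= y i <= 1) ->
  is_oracleF z F OF ->
  is_oracleH x H OH ->
  sample_set_convex z F ->
  (0 < T)%N ->
  sup [set Phi y x z (ensemble y x z OF OH T) f | f in F]
    <= inf [set sup [set Phi y x z h f | f in F] | h in H]
       + 8 * (ln (T%:R : R) + 1) / T%:R.
Proof.
move=> hH hF hy oF oH cvx T0.
by apply: main.
Qed.
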